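(* Let $\mathcal H_A,\mathcal H_B$ be finite-dimensional Hilbert spaces, $|0_A\rangle\in\mathcal H_A$, $|0_B\rangle\in\mathcal H_B$ unit vectors, $|0\rangle=|0_A\rangle\otimes|0_B\rangle$, and let $|\phi\rangle\in\mathcal H_A\otimes\mathcal H_B$ be a unit vector (e.g. $|\phi\rangle=O(t)|0\rangle$ for a unitary $O(t)$). Decompose $|\phi\rangle=|x\rangle\otimes|0_B\rangle+|y\rangle$, where $|x\rangle=(\mathbb 1_A\otimes\langle 0_B|)|\phi\rangle\in\mathcal H_A$ and $(\mathbb 1_A\otimes\langle 0_B|)|y\rangle=0$. Fix $0<\epsilon<1$ and let $|\psi\rangle=(|0\rangle+\epsilon|\phi\rangle)/\sqrt{\mathcal N}$ with $\mathcal N=1+\epsilon^2+2\epsilon\,\mathrm{Re}\langle 0|\phi\rangle$, and $\rho_A=\operatorname{tr}_B|\psi\rangle\langle\psi|$. Set $\mu=\epsilon^2\langle y|y\rangle/\mathcal N$. Then $\mu\le\epsilon^2$, and for every $\alpha>1$, $$S_\alpha(\rho_A)\le \frac{\alpha}{\alpha-1}\log\frac{1}{1-\mu}\le\frac{\alpha}{\alpha-1}\log\frac{1}{1-\epsilon^2}.$$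
   Context: For a density matrix $\rho$, the Rényi entropy is $S_\alpha(\rho)=\frac{1}{1-\alpha}\log\operatorname{tr}\rho^\alpha$. One has $\rho_A=(1-\mu)|v\rangle\langle v|+\mu\,\omega$ with $|v\rangle=(|0_A\rangle+\epsilon|x\rangle)/\sqrt{\mathcal N(1-\mu)}$ a unit vector and $\omega=\operatorname{tr}_B|y\rangle\langle y|/\langle y|y\rangle$ (when $|y\rangle\neq 0$). *)

(* Defs.v *)
From mathcomp Require Import all_boot all_algebra spectral sesquilinear.
From mathcomp Require Import complex.
From mathcomp Require Import reals exp.
Set Implicit Arguments. Unset Strict Implicit. Unset Printing Implicit Defensive.
Import GRing.Theory Num.Theory.
Local Open Scope ring_scope.

Section QDefs.
Variable R : realType.
Local Notation C := R[i].

(* A vector of H_A = C^dA is a row vector 'rV[C]_dA.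
   A vector of H_A (x) H_B = C^dA (x) C^dB is represented by its coefficient
   array 'M[C]_(dA, dB):  |v> = sum_{a,b} v a b |a> (x) |b>. *)

Definition innerA dA (u v : 'rV[C]_dA) : C := \sum_i (u 0 i)^* * v 0 i.
Definition innerAB dA dB (u v : 'M[C]_(dA, dB)) : C :=
  \sum_i \sum_j (u i j)^* * v i j.

Definition tens dA dB (a : 'rV[C]_dA) (b : 'rV[C]_dB) : 'M[C]_(dA, dB) :=
  \matrix_(i, j) (a 0 i * b 0 j).

Definition contrB dA dB (b : 'rV[C]_dB) (v : 'M[C]_(dA, dB)) : 'rV[C]_dA :=
  \row_i \sum_j (b 0 j)^* * v i j.

(* tr_B |v><v| ,  entries  (i,i') = sum_j v_{ij} conj(v_{i'j}) *)
Definition ptraceB dA dB (v : 'M[C]_(dA, dB)) : 'M[C]_dA :=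
  \matrix_(i, i') \sum_j v i j * (v i' j)^*.

(* tr rho^alpha for a Hermitian (PSD) matrix, via its spectral decomposition
   rho = U^-1 diag(lambda) U : tr rho^alpha = sum_i lambda_i^alpha *)
Definition trpow n (rho : 'M[C]_n) (alpha : R) : R :=
  \sum_i (complex.Re (spectral_diag rho 0 i)) `^ alpha.

Definition renyi n (alpha : R) (rho : 'M[C]_n) : R :=
  (1 - alpha)^-1 * ln (trpow rho alpha).

End QDefs.

(* Main.v *)
Require Import Defs.
From mathcomp Require Import all_boot all_algebra spectral sesquilinear.
From mathcomp Require Import complex.
From mathcomp Require Import reals exp.
From mathcomp Require Import order ring lra.
Set Implicit Arguments. Unset Strict Implicit. Unset Printing Implicit Defensive.
Import Order.TTheory GRing.Theory Num.Theory.
Local Open Scope complex_scope.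
Local Open Scope ring_scope.

Section H.
Variable R : realType.
Local Notation C := R[i].

Lemma conjR (a : R) : (a%:C)^* = a%:C.
Proof. by apply/eqP; rewrite eq_complex /= oppr0 !eqxx. Qed.

Lemma ReMR (a : R) (z : C) : complex.Re (a%:C * z) = a * complex.Re z.
Proof. by case: z => x y /=; rewrite mul0r subr0. Qed.

Lemma conjMz (z : C) : z^* * z = (complex.Re z ^+ 2 + complex.Im z ^+ 2)%:C.
Proof. case: z => x y; apply/eqP; rewrite eq_complex /=; apply/andP; split; apply/eqP; ring. Qed.

Lemma zMconj (z : C) : z * z^* = (complex.Re z ^+ 2 + complex.Im z ^+ 2)%:C.
Proof. by rewrite mulrC conjMz. Qed.

Lemma cReD (z w : C) : complex.Re (z + w) = complex.Re z + complex.Re w.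
Proof. by case: z; case: w. Qed.

Lemma cRe_sum (I : finType) (F : I -> C) : complex.Re (\sum_i F i) = \sum_i complex.Re (F i).
Proof.
have Re0 : complex.Re (0 : C) = 0 by []. by rewrite (big_morph (@complex.Re R) cReD Re0).
Qed.

Lemma cRe_conj (z : C) : complex.Re (z^*) = complex.Re z.
Proof. by case: z. Qed.

Lemma cRe_R (a : R) : complex.Re (a%:C) = a.
Proof. by []. Qed.

Lemma conj_sum (I : finType) (F : I -> C) : (\sum_i F i)^* = \sum_i (F i)^*.
Proof. by rewrite rmorph_sum. Qed.

Variables m n : nat.
Implicit Types u v w : 'M[C]_(m, n).

Lemma ipDl u v w : innerAB (u + v) w = innerAB u w + innerAB v w.
Proof.
rewrite /innerAB -big_split /=; apply: eq_bigr => i _.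
rewrite -big_split /=; apply: eq_bigr => j _.
by rewrite !mxE rmorphD mulrDl.
Qed.

Lemma ipDr u v w : innerAB w (u + v) = innerAB w u + innerAB w v.
Proof.
rewrite /innerAB -big_split /=; apply: eq_bigr => i _.
rewrite -big_split /=; apply: eq_bigr => j _.
by rewrite !mxE mulrDr.
Qed.

Lemma ipZl (c : C) u w : innerAB (c *: u) w = c^* * innerAB u w.
Proof.
rewrite /innerAB mulr_sumr; apply: eq_bigr => i _.
rewrite mulr_sumr; apply: eq_bigr => j _.
by rewrite !mxE rmorphM mulrA.
Qed.

Lemma ipZr (c : C) u w : innerAB u (c *: w) = c * innerAB u w.
Proof.
rewrite /innerAB mulr_sumr; apply: eq_bigr => i _.
rewrite mulr_sumr; apply: eq_bigr => j _.
by rewrite !mxE mulrCA.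
Qed.

Lemma ipC u v : innerAB v u = (innerAB u v)^*.
Proof.
rewrite /innerAB rmorph_sum; apply: eq_bigr => i _.
rewrite rmorph_sum; apply: eq_bigr => j _.
by rewrite rmorphM /= conjCK mulrC.
Qed.

Lemma ip_ge0 u : 0 <= complex.Re (innerAB u u).
Proof.
rewrite /innerAB cRe_sum sumr_ge0 // => i _.
rewrite cRe_sum sumr_ge0 // => j _.
by rewrite conjMz cRe_R addr_ge0 // sqr_ge0.
Qed.

Lemma ip_real u : innerAB u u = (complex.Re (innerAB u u))%:C.
Proof.
rewrite {1}/innerAB.
have -> : \sum_i \sum_j (u i j)^* * u i j = \sum_i \sum_j ((complex.Re (u i j) ^+ 2 + complex.Im (u i j) ^+ 2)%:C).
  by apply: eq_bigr => i _; apply: eq_bigr => j _; rewrite conjMz.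
rewrite /innerAB cRe_sum; rewrite rmorph_sum; apply: eq_bigr => i _.
rewrite cRe_sum rmorph_sum; apply: eq_bigr => j _.
by rewrite conjMz.
Qed.

End H.

Section H2.
Variable R : realType.
Local Notation C := R[i].

Lemma ipexp m n (u v : 'M[C]_(m, n)) (c : R) :
  complex.Re (innerAB (u + c%:C *: v) (u + c%:C *: v)) =
  complex.Re (innerAB u u) + c ^+ 2 * complex.Re (innerAB v v)
  + 2 * c * complex.Re (innerAB u v).
Proof.
rewrite !ipDl !ipDr !ipZl !ipZr conjR (@ipC R m n v u) !cReD !ReMR cRe_conj.
ring.
Qed.

Lemma innerAE n (u v : 'rV[C]_n) : innerA u v = innerAB u v.
Proof. by rewrite /innerAB big_ord1. Qed.

Lemma exists_ge n (f g : 'I_n -> R) (c : R) :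
  (forall i, 0 <= g i) -> 0 < \sum_i g i ->
  c * \sum_i g i <= \sum_i f i * g i -> exists i, c <= f i.
Proof.
move=> g0 gpos H.
have [//|] := boolP [exists i, c <= f i].
  by move/existsP.
rewrite negb_exists => /forallP Hn.
have Hlt : forall i, f i < c by move=> i; rewrite ltNge Hn.
have H0 : \sum_i (c - f i) * g i = 0.
  apply/eqP; rewrite eq_le; apply/andP; split.
    rewrite (eq_bigr (fun i => c * g i - f i * g i)); last by move=> i _; rewrite mulrBl.
    by rewrite sumrB -mulr_sumr subr_le0.
  by apply: sumr_ge0 => i _; rewrite mulr_ge0 // subr_ge0 ltW.
have Hnn : forall j, predT j -> 0 <= (c - f j) * g j.
  by move=> j _; rewrite mulr_ge0 // subr_ge0 ltW.
have Hg : forall i, g i = 0.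
  move=> i; have := @psumr_eq0P _ _ predT (fun i => (c - f i) * g i) Hnn H0 i isT.
  move=> /eqP; rewrite mulf_eq0 subr_eq0 => /orP [/eqP E|/eqP //].
  by have := Hlt i; rewrite E ltxx.
by move: gpos; rewrite (eq_bigr (fun _ => 0)) ?big1 ?ltxx // => i _; rewrite Hg.
Qed.

Local Open Scope sesquilinear_scope.

Lemma spectral_quad n (M : 'M[C]_n) (w : 'rV[C]_n) : M \is normalmx ->
  let sp := spectral_diag M in let z := w *m (spectralmx M)^t* in
  (w *m M *m w^t*) 0 0 = \sum_i sp 0 i * (z 0 i * (z 0 i)^*) /\
  \sum_i z 0 i * (z 0 i)^* = (w *m w^t*) 0 0.
Proof.
move=> /orthomx_spectralP HM sp z.
have PU := spectral_unitarymx M.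
have Ez : (spectralmx M) *m w^t* = z^t*.
  by rewrite /z trmx_mul map_mxM trmxCK.
split.
  rewrite {1}HM invmx_unitary // !mulmxA -/z -!mulmxA Ez mulmxA -/z mulmxA mul_mx_diag -/sp.
  rewrite mxE; apply: eq_bigr => i _; rewrite !mxE; ring.
rewrite -{1}(mulmxKtV w PU (erefl _)) -/z -mulmxA Ez mxE.
by apply: eq_bigr => i _; rewrite !mxE.
Qed.

End H2.

Section H3.
Variable R : realType.
Local Notation C := R[i].

Lemma ptraceB_normal m n (v : 'M[C]_(m, n)) : ptraceB v \is normalmx.
Proof.
have E : ((ptraceB v)^t*)%sesqui = ptraceB v.
  apply/matrixP => i k; rewrite !mxE rmorph_sum; apply: eq_bigr => j _.
  by rewrite rmorphM /= conjCK mulrC.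
by apply/normalmxP; rewrite E.
Qed.

Variables (dA dB : nat) (b0 : 'rV[C]_dB).
Hypothesis hb : innerA b0 b0 = 1.

Lemma tens_orth (p : 'rV[C]_dA) (Y : 'M[C]_(dA, dB)) :
  (forall i, \sum_j (b0 0 j)^* * Y i j = 0) -> innerAB (tens p b0) Y = 0.
Proof.
move=> HY; rewrite /innerAB big1 // => i _.
rewrite (eq_bigr (fun j => (p 0 i)^* * ((b0 0 j)^* * Y i j))).
  by rewrite -mulr_sumr HY mulr0.
by move=> j _; rewrite !mxE rmorphM mulrA.
Qed.

Lemma tens_ip (p q : 'rV[C]_dA) : innerAB (tens p b0) (tens q b0) = innerA p q.
Proof.
rewrite /innerAB /innerA; apply: eq_bigr => i _.
rewrite (eq_bigr (fun j => ((p 0 i)^* * q 0 i) * ((b0 0 j)^* * b0 0 j))).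
  by rewrite -mulr_sumr -/(innerA b0 b0) hb mulr1.
by move=> j _; rewrite !mxE rmorphM; ring.
Qed.

Lemma tens_phi (p : 'rV[C]_dA) (phi : 'M[C]_(dA, dB)) :
  innerAB (tens p b0) phi = innerA p (contrB b0 phi).
Proof.
rewrite /innerAB /innerA; apply: eq_bigr => i _.
rewrite !mxE mulr_sumr; apply: eq_bigr => j _.
by rewrite !mxE rmorphM; ring.
Qed.

Lemma y_orth (phi : 'M[C]_(dA, dB)) i :
  \sum_j (b0 0 j)^* * (phi - tens (contrB b0 phi) b0) i j = 0.
Proof.
rewrite (eq_bigr (fun j => (b0 0 j)^* * phi i j - (contrB b0 phi) 0 i * ((b0 0 j)^* * b0 0 j))).
  by rewrite sumrB -mulr_sumr -/(innerA b0 b0) hb mulr1 mxE subrr.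
by move=> j _; rewrite !mxE; ring.
Qed.

End H3.

Section H4.
Variable R : realType.
Local Notation C := R[i].
Local Open Scope sesquilinear_scope.

Lemma ptraceB_quad m n (v : 'M[C]_(m, n)) (w : 'rV[C]_m) :
  (w *m ptraceB v *m w^t*) 0 0 = innerA (w *m v) (w *m v).
Proof.
have -> : ptraceB v = v *m v^t*.
  by apply/matrixP => i k; rewrite !mxE; apply: eq_bigr => j _; rewrite !mxE.
rewrite !mulmxA -mulmxA -map_mxM -trmx_mul mxE /innerA.
by apply: eq_bigr => j _; rewrite !mxE mulrC.
Qed.

Lemma ww_inner n (u w : 'rV[C]_n) : (forall i, w 0 i = (u 0 i)^*) ->
  (w *m w^t*) 0 0 = innerA u u.
Proof.
move=> Ew; rewrite mxE /innerA; apply: eq_bigr => i _.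
by rewrite !mxE Ew conjCK.
Qed.

End H4.

Lemma main_aux (R : realType) (dA dB : nat)
  (a0 : 'rV[R[i]]_dA) (b0 : 'rV[R[i]]_dB) (phi : 'M[R[i]]_(dA, dB)) (eps : R) :
  innerA a0 a0 = 1 -> innerA b0 b0 = 1 -> innerAB phi phi = 1 ->
  0 < eps -> eps < 1 ->
  let ket0 := tens a0 b0 in
  let x := contrB b0 phi in
  let y := phi - tens x b0 in
  let N := 1 + eps ^+ 2 + 2 * eps * complex.Re (innerAB ket0 phi) in
  let psi := ((Num.sqrt N)^-1)%:C *: (ket0 + eps%:C *: phi) in
  let rhoA := ptraceB psi in
  let mu := eps ^+ 2 * complex.Re (innerAB y y) / N in
  mu <= eps ^+ 2 /\
  forall alpha : R, 1 < alpha ->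
    renyi alpha rhoA <= alpha / (alpha - 1) * ln ((1 - mu)^-1) /\
    alpha / (alpha - 1) * ln ((1 - mu)^-1)
      <= alpha / (alpha - 1) * ln ((1 - eps ^+ 2)^-1).
Proof.
move=> ha hb hphi e0 e1 ket0 x y N psi rhoA mu.
have horth : forall i, \sum_j (b0 0 j)^* * y i j = 0 := y_orth hb phi.
have Ephi : phi = tens x b0 + y by rewrite /y addrC subrK.
have Ey : forall i j, phi i j = y i j + x 0 i * b0 0 j.
  by move=> i j; rewrite {1}Ephi !mxE addrC.
clearbody y.
have Ty : forall p, innerAB (tens p b0) y = 0 := fun p => tens_orth p horth.
have yT : forall p, innerAB y (tens p b0) = 0.
  by move=> p; rewrite (ipC (tens p b0)); apply/eqP; rewrite conjC_eq0; apply/eqP; exact: Ty.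
set X := complex.Re (innerA x x).
set Y := complex.Re (innerAB y y).
set p := complex.Re (innerA a0 x).
have hXY : X + Y = 1.
  have : innerAB phi phi = innerA x x + innerAB y y.
    by rewrite {1 2}Ephi !ipDl !ipDr Ty yT tens_ip // addr0 add0r.
  by move/(congr1 (@complex.Re R)); rewrite hphi cReD.
have hX0 : 0 <= X by rewrite /X innerAE ip_ge0.
have hY0 : 0 <= Y by rewrite /Y ip_ge0.
have hN : N = 1 + eps ^+ 2 + 2 * eps * p by rewrite /N /ket0 tens_phi.
have hs1 : 0 <= 1 + X + 2 * p.
  have := ip_ge0 (a0 + 1%:C *: x); rewrite ipexp -!innerAE ha.
  rewrite expr1n mul1r mulr1 /=; rewrite /X /p; lra.
have hs2 : 0 <= X + eps ^+ 2 + 2 * eps * p.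
  have := ip_ge0 (x + eps%:C *: a0); rewrite ipexp -!innerAE ha.
  rewrite (innerAE x a0) (ipC a0 x) cRe_conj -innerAE.
  rewrite /= /X /p; lra.
have hNpos : 0 < N by rewrite hN; nra.
have hYN : Y <= N by rewrite hN; lra.
have hmu : mu <= eps ^+ 2.
  by rewrite /mu ler_pdivrMr //; apply: ler_wpM2l => //; rewrite exprn_ge0 // ltW.
split => //.

set u := a0 + eps%:C *: x.
set U := complex.Re (innerA u u).
have hU : U = 1 + eps ^+ 2 * X + 2 * eps * p.
  by rewrite /U /u innerAE ipexp -!innerAE ha /= /X /p.
have Eu : forall i, u 0 i = a0 0 i + eps%:C * x 0 i by move=> i; rewrite !mxE.
clearbody u.
have hUN : U = N - eps ^+ 2 * Y.
  by rewrite hU hN (_ : X = 1 - Y); [ring | lra].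
have hUpos : 0 < U.
  rewrite hUN; have : eps ^+ 2 * Y <= eps ^+ 2 * N.
    by apply: ler_wpM2l => //; rewrite exprn_ge0 // ltW.
  have : 0 < (1 - eps ^+ 2) * N.
    by apply: mulr_gt0 => //; rewrite subr_gt0 expr2; nra.
  lra.
have h1mu : 1 - mu = U / N.
  rewrite /mu hUN; field; exact: lt0r_neq0.
set w : 'rV[R[i]]_dA := \row_i Num.conj (u 0 i).
set r : 'rV[R[i]]_dB := \row_j \sum_i w 0 i * y i j.
have Ew : forall i, w 0 i = Num.conj (u 0 i) by move=> i; rewrite mxE.
have Er : forall j, r 0 j = \sum_i w 0 i * y i j by move=> j; rewrite mxE.
clearbody w r.
set s := (Num.sqrt N)^-1.
have hUc : (U%:C : R[i]) = \sum_i w 0 i * u 0 i.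
  rewrite /U innerAE -ip_real -innerAE /innerA; apply: eq_bigr => i _.
  by rewrite Ew.
have ht : w *m psi = s%:C *: (U%:C *: b0 + eps%:C *: r).
  apply/rowP => j; rewrite !mxE Er hUc mulr_suml mulr_sumr -big_split mulr_sumr.
  apply: eq_bigr => i _; rewrite /psi /ket0 !mxE Ey Eu; rewrite /s /=; ring.

have hrb : innerAB b0 r = 0.
  rewrite /innerAB big_ord1.
  under eq_bigr do rewrite Er mulr_sumr.
  rewrite exchange_big /= big1 // => i _.
  rewrite (eq_bigr (fun j => w 0 i * ((b0 0 j)^* * y i j))); last by move=> j _; ring.
  by rewrite -mulr_sumr horth mulr0.
have hQ : complex.Re ((w *m rhoA *m (w^t*)%sesqui) 0 0)
          = s * (s * (U * U + eps ^+ 2 * complex.Re (innerAB r r))).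
  rewrite /rhoA ptraceB_quad innerAE ht ipZl ipZr conjR ReMR ReMR ipexp.
  rewrite !ipZl !ipZr conjR hrb -(innerAE b0 b0) hb mulr0 mulr1 !ReMR /=.
  ring.
have ss : s * s = N^-1.
  by rewrite /s -expr2 exprVn sqr_sqrtr // ltW.
have hr0 := ip_ge0 r.
have [hq1 hq2] := spectral_quad w (ptraceB_normal psi).
set sp := spectral_diag (ptraceB psi) in hq1 hq2.
pose z := (w *m ((spectralmx (ptraceB psi))^t*)%sesqui).
pose g i := complex.Re (z 0 i) ^+ 2 + complex.Im (z 0 i) ^+ 2.
have hsumg : \sum_i g i = U.
  move: hq2; rewrite (ww_inner Ew) innerAE ip_real -innerAE -/U.
  under eq_bigr do rewrite zMconj.
  rewrite -raddf_sum => /complexI <-; by apply: eq_bigr.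
have hReQ : complex.Re ((w *m rhoA *m (w^t*)%sesqui) 0 0) = \sum_i complex.Re (sp 0 i) * g i.
  rewrite /rhoA hq1 cRe_sum; apply: eq_bigr => i _.
  by rewrite [_ * (_)^*]zMconj [sp 0 i * _]mulrC ReMR mulrC.
have [k hk] : exists k, U / N <= complex.Re (sp 0 k).
  apply: (@exists_ge _ _ _ g).
  - by move=> i; rewrite /g addr_ge0 // sqr_ge0.
  - by rewrite hsumg.
  rewrite -hReQ hQ hsumg mulrA ss.
  have : 0 <= s * (s * (eps ^+ 2 * complex.Re (innerAB r r))).
    rewrite mulrA ss; apply: mulr_ge0; first by rewrite invr_ge0 ltW.
    by apply: mulr_ge0 => //; rewrite exprn_ge0 // ltW.
  rewrite mulrA ss => h.
  rewrite mulrDr mulrA [U / N]mulrC; lra.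

move=> alpha ha1.
have hUN0 : 0 < U / N by rewrite divr_gt0.
have hal0 : 0 <= alpha by rewrite ltW // (lt_trans _ ha1).
have hT : (U / N) `^ alpha <= trpow rhoA alpha.
  rewrite /trpow (bigD1 k) //=.
  apply: (@le_trans _ _ (complex.Re (spectral_diag rhoA 0 k) `^ alpha)).
    apply: (ge0_ler_powR hal0); rewrite ?nnegrE.
    - exact: ltW.
    - exact: le_trans (ltW hUN0) hk.
    - exact: hk.
  by rewrite lerDl sumr_ge0 // => i _; rewrite powR_ge0.
have hTpos : 0 < trpow rhoA alpha by apply: lt_le_trans hT; rewrite powR_gt0.
have hA : alpha - 1 != 0 by apply: lt0r_neq0; rewrite subr_gt0.
have hB : 1 - alpha != 0 by apply: ltr0_neq0; rewrite subr_lt0.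
have h1mu0 : 0 < 1 - mu by rewrite h1mu.
split.
  have -> : alpha / (alpha - 1) * ln ((1 - mu)^-1) = (1 - alpha)^-1 * ln ((U / N) `^ alpha).
    rewrite ln_powR lnV ?posrE // h1mu.
    field; rewrite hA hB //.
  rewrite /renyi; apply: ler_wnM2l.
    by rewrite invr_le0 subr_le0 ltW.
  by rewrite ler_ln ?posrE // powR_gt0.
apply: ler_wpM2l.
  by rewrite divr_ge0 // subr_ge0 ltW.
have he2 : 0 < 1 - eps ^+ 2 by rewrite subr_gt0 expr2; nra.
rewrite ler_ln ?posrE ?invr_gt0 //.
rewrite lef_pV2 ?posrE //; lra.
Qed.

Local Open Scope complex_scope.

Theorem mainTheorem1 (R : realType) (dA dB : nat)
  (a0 : 'rV[R[i]]_dA) (b0 : 'rV[R[i]]_dB) (phi : 'M[R[i]]_(dA, dB)) (eps : R) :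
  innerA a0 a0 = 1 -> innerA b0 b0 = 1 -> innerAB phi phi = 1 ->
  0 < eps -> eps < 1 ->
  let ket0 := tens a0 b0 in
  let x := contrB b0 phi in
  let y := phi - tens x b0 in
  let N := 1 + eps ^+ 2 + 2 * eps * complex.Re (innerAB ket0 phi) in
  let psi := ((Num.sqrt N)^-1)%:C *: (ket0 + eps%:C *: phi) in
  let rhoA := ptraceB psi in
  let mu := eps ^+ 2 * complex.Re (innerAB y y) / N in
  mu <= eps ^+ 2 /\
  forall alpha : R, 1 < alpha ->
    renyi alpha rhoA <= alpha / (alpha - 1) * ln ((1 - mu)^-1) /\
    alpha / (alpha - 1) * ln ((1 - mu)^-1)
      <= alpha / (alpha - 1) * ln ((1 - eps ^+ 2)^-1).
Proof. exact: main_aux. Qed.
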